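(* Every pair of orthogonal quantum Latin squares of order $4$ is classical.
   Context: A quantum Latin square (QLS) of order $n$ is an $n\times n$ matrix $\Psi=(\psi_{ij})_{1\le i,j\le n}$ whose entries are unit vectors in $\mathbb C^n$ such that the entries of each row and the entries of each column form an orthonormal basis of $\mathbb C^n$. Two QLS $\Psi=(\psi_{ij})$ and $\Phi=(\phi_{ij})$ of order $n$ are orthogonal if $\{\psi_{ij}\otimes\phi_{ij}: 1\le i,j\le n\}$ is an orthonormal basis of $\mathbb C^n\otimes\mathbb C^n$. Fix the standard orthonormal basis $\ket{1},\dots,\ket{n}$ of $\mathbb C^n$. Two pairs of orthogonal QLS of order $n$ are isotopic if one can be obtained from the other by a sequence of the operations: (i) multiplying individual entries by phase factors; (ii) permuting the rows, and permuting the columns, simultaneously in both squares; (iii) for each square separately, applying one unitary transformation of $\mathbb C^n$ to all entries of that square. A pair is classical if it is isotopic to a pair all of whose entries lie in $\{\ket{1},\dots,\ket{n}\}$. *)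

(* Defs.v *)
From HB Require Import structures.
From mathcomp Require Import all_boot all_order all_algebra.
From mathcomp Require Import fingroup perm complex mxtens.
From mathcomp Require Import reals.
From Stdlib Require Import Relations.

Set Implicit Arguments.
Unset Strict Implicit.
Unset Printing Implicit Defensive.

Import Order.TTheory GRing.Theory Num.Theory.
Local Open Scope ring_scope.

Section QLS.
Variable R : rcfType.
Local Notation C := R[i].

Definition adj {m n : nat} (A : 'M[C]_(m, n)) : 'M[C]_(n, m) :=
  (map_mx Num.conj A)^T.

(* standard Hermitian inner product <u, v> = u^* v (conjugate-linear in u) *)
Definition hdot {n : nat} (u v : 'cV[C]_n) : C := (adj u *m v) 0 0.

Definition orthonormal {I : finType} {n : nat} (f : I -> 'cV[C]_n) : Prop :=
  forall i j, hdot (f i) (f j) = (i == j)%:R.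

Definition spans {I : finType} {n : nat} (f : I -> 'cV[C]_n) : Prop :=
  forall v : 'cV[C]_n, exists c : I -> C, v = \sum_i c i *: f i.

Definition is_onb {I : finType} {n : nat} (f : I -> 'cV[C]_n) : Prop :=
  orthonormal f /\ spans f.

Definition square (n : nat) := 'I_n -> 'I_n -> 'cV[C]_n.

Definition is_QLS {n : nat} (Psi : square n) : Prop :=
  (forall i, is_onb (fun j => Psi i j)) /\ (forall j, is_onb (fun i => Psi i j)).

(* orthogonality of two QLS: the psi_ij (x) phi_ij form an ONB of C^n (x) C^n,
   with C^n (x) C^n = C^(n*n) via the Kronecker product *)
Definition orthogonal_QLS {n : nat} (Psi Phi : square n) : Prop :=
  is_onb (fun ij : ('I_n * 'I_n)%type => Psi ij.1 ij.2 *t Phi ij.1 ij.2).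

Definition unitary {n : nat} (U : 'M[C]_n) : Prop := U *m adj U = 1%:M.

Inductive isotopy_step {n : nat} : (square n * square n)%type -> (square n * square n)%type -> Prop :=
  | iso_phase (P Q : square n) (a b : 'I_n -> 'I_n -> C) :
      (forall i j, `|a i j| = 1) -> (forall i j, `|b i j| = 1) ->
      isotopy_step (P, Q) (fun i j => a i j *: P i j, fun i j => b i j *: Q i j)
  | iso_perm (P Q : square n) (s t : 'S_n) :
      isotopy_step (P, Q) (fun i j => P (s i) (t j), fun i j => Q (s i) (t j))
  | iso_unitary (P Q : square n) (U V : 'M[C]_n) :
      unitary U -> unitary V ->
      isotopy_step (P, Q) (fun i j => U *m P i j, fun i j => V *m Q i j).

Definition isotopic {n : nat} (PQ PQ' : (square n * square n)%type) : Prop :=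
  clos_refl_trans _ isotopy_step PQ PQ'.

Definition ket {n : nat} (k : 'I_n) : 'cV[C]_n := delta_mx k 0.

Definition classical_pair {n : nat} (Psi Phi : square n) : Prop :=
  exists Psi' Phi' : square n,
    isotopic (Psi, Phi) (Psi', Phi') /\
    (forall i j, exists k, Psi' i j = ket k) /\
    (forall i j, exists k, Phi' i j = ket k).

End QLS.

(* Main.v *)
Require Import Defs.
From HB Require Import structures.
From mathcomp Require Import all_boot all_order all_algebra.
From mathcomp Require Import complex mxtens reals.
Set Implicit Arguments. Unset Strict Implicit. Unset Printing Implicit Defensive.
Import Order.TTheory GRing.Theory Num.Theory.
Local Open Scope ring_scope.
From Stdlib Require Import Relations.

Lemma four (a b c d t : 'I_4) : a != b -> a != c -> a != d -> b != c -> b != d -> c != d ->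
  [|| t == a, t == b, t == c | t == d].
Proof.
by case: a => [[|[|[|[|?]]]] ?] //; case: b => [[|[|[|[|?]]]] ?] //;
   case: c => [[|[|[|[|?]]]] ?] //; case: d => [[|[|[|[|?]]]] ?] //;
   case: t => [[|[|[|[|?]]]] ?].
Qed.

Lemma rows3 (i : 'I_4) : i != 0 -> exists i1 i2 : 'I_4,
  [/\ i1 != 0, i1 != i, i2 != 0, i2 != i & i1 != i2].
Proof.
case: i => [[|[|[|[|?]]]] ?] // _.
- by exists (@Ordinal 4 2 isT), (@Ordinal 4 3 isT).
- by exists (@Ordinal 4 1 isT), (@Ordinal 4 3 isT).
- by exists (@Ordinal 4 1 isT), (@Ordinal 4 2 isT).
Qed.

Section Aux.
Variable R : rcfType.
Local Notation C := R[i].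

Lemma sum4 (F : 'I_4 -> C) (a b c d : 'I_4) :
  a != b -> a != c -> a != d -> b != c -> b != d -> c != d ->
  \sum_t F t = F a + F b + F c + F d.
Proof.
move=> ab ac ad bc bd cd.
rewrite (bigD1 a) //= (bigD1 b) 1?eq_sym //= (bigD1 c) /= ?(eq_sym c) ?bc ?ac //.
rewrite (bigD1 d) /= ?(eq_sym d) ?bd ?ad ?cd //.
rewrite big1 ?addr0 ?addrA // => t /andP[/andP[/andP[ta tb] tc] td].
by move: (four t ab ac ad bc bd cd); rewrite (negPf ta) (negPf tb) (negPf tc) (negPf td).
Qed.

Lemma hdotE n (u v : 'cV[C]_n) : hdot u v = \sum_k (u k 0)^* * v k 0.
Proof. by rewrite /hdot /adj mxE; apply: eq_bigr => k _; rewrite !mxE. Qed.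

Lemma adjM m n p (A : 'M[C]_(m,n)) (B : 'M[C]_(n,p)) : adj (A *m B) = adj B *m adj A.
Proof. by rewrite /adj map_mxM trmx_mul. Qed.

Lemma hdot_tens m n (a c : 'cV[C]_m) (b d : 'cV[C]_n) :
  hdot (a *t b) (c *t d) = hdot a c * hdot b d.
Proof.
rewrite /hdot /adj.
have -> : (map_mx Num.conj (a *t b))^T = (map_mx Num.conj a)^T *t (map_mx Num.conj b)^T.
  by apply/matrixP => i j; rewrite !mxE rmorphM.
rewrite (tensmx_mul (map_mx Num.conj a)^T (map_mx Num.conj b)^T c d) mxE.
by rewrite !(ord1 (_ : 'I_1)).
Qed.

Lemma ketE n (k m : 'I_n) : @ket R n k m 0 = (m == k)%:R.
Proof. by rewrite /ket mxE andbT. Qed.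


Lemma hdot_ket n (k : 'I_n) (v : 'cV[C]_n) : hdot (@ket R n k) v = v k 0.
Proof.
rewrite hdotE (bigD1 k) //= ketE eqxx conjC1 mul1r big1 ?addr0 // => t tk.
by rewrite ketE (negPf tk) conjC0 mul0r.
Qed.

Lemma nz_of_norm n (u : 'cV[C]_n) : hdot u u = 1 -> exists k, u k 0 != 0.
Proof.
move=> h; case: (pickP (fun k => u k 0 != 0)) => [k hk|h0]; first by exists k.
move: h; rewrite hdotE big1 => [/eqP|k _]; first by rewrite eq_sym oner_eq0.
by have := h0 k => /negbFE/eqP ->; rewrite mulr0.
Qed.

Definition Umx n (f : 'I_n -> 'cV[C]_n) : 'M[C]_n := \matrix_(k, m) (f k m 0)^*.

Lemma UmxE n f (v : 'cV[C]_n) k : (Umx f *m v) k 0 = hdot (f k) v.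
Proof. by rewrite mxE hdotE; apply: eq_bigr => m _; rewrite mxE. Qed.

Lemma Umx_unitary n (f : 'I_n -> 'cV[C]_n) : Defs.orthonormal f -> Defs.unitary (Umx f).
Proof.
move=> hf; apply/matrixP => k k'; rewrite !mxE -hf hdotE.
by apply: eq_bigr => m _; rewrite !mxE conjCK.
Qed.

Lemma hdotU n (U : 'M[C]_n) (u v : 'cV[C]_n) : Defs.unitary U ->
  hdot (U *m u) (U *m v) = hdot u v.
Proof.
move=> hU; rewrite /hdot adjM -mulmxA (mulmxA (adj U)) (mulmx1C hU) mul1mx //.
Qed.


Lemma mul_conj_eq0 (a b : C) : a^* * b = 0 -> a != 0 -> b = 0.
Proof. by move=> /eqP; rewrite mulf_eq0 conjC_eq0 => /orP[/eqP->|/eqP//]; rewrite eqxx. Qed.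

Lemma core (X Y : 'I_4 -> 'I_4 -> 'cV[C]_4) :
  (forall i j i', hdot (X i j) (X i' j) = (i == i')%:R) ->
  (forall i j i', hdot (Y i j) (Y i' j) = (i == i')%:R) ->
  (forall k, X 0 k = @ket R 4 k) -> (forall k, Y 0 k = @ket R 4 k) ->
  (forall i j i' j', (i, j) != (i', j') ->
      hdot (X i j) (X i' j') * hdot (Y i j) (Y i' j') = 0) ->
  forall i j, exists m, forall k, k != m -> X i j k 0 = 0.
Proof.
move=> hX hY X0 Y0 hXY i j.
have F1 : forall i' j' t, i' != 0 -> X i' j' t 0 = 0 \/ Y i' j' t 0 = 0.
  move=> i' j' t ni; have := hXY 0 t i' j'.
  rewrite X0 Y0 !hdot_ket xpair_eqE eq_sym (negPf ni) => /(_ isT) /eqP.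
  by rewrite mulf_eq0 => /orP[/eqP->|/eqP->]; [left|right].
have F2 : forall i' j', i' != 0 -> X i' j' j' 0 = 0.
  by move=> i' j' ni; have := hX 0 j' i'; rewrite X0 hdot_ket eq_sym (negPf ni).
have F3 : forall i' j', i' != 0 -> Y i' j' j' 0 = 0.
  by move=> i' j' ni; have := hY 0 j' i'; rewrite Y0 hdot_ket eq_sym (negPf ni).
have [->|ni] := eqVneq i 0.
  by exists j => k kj; rewrite X0 ketE (negPf kj).
have := hX i j i; rewrite eqxx => /nz_of_norm [m xm].
exists m => k km; apply/eqP/negP => /negP xk.
have ym : Y i j m 0 = 0 by case: (F1 i j m ni) => // /eqP; rewrite (negPf xm).
have yk : Y i j k 0 = 0 by case: (F1 i j k ni) => // /eqP; rewrite (negPf xk).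
have jm : j != m by apply: contraNneq xm => <-; rewrite F2.
have jk : j != k by apply: contraNneq xk => <-; rewrite F2.
have := hY i j i; rewrite eqxx => /nz_of_norm [l yl].
have jl : j != l by apply: contraNneq yl => <-; rewrite F3.
have ml : m != l by apply: contraNneq yl => <-; rewrite ym.
have kl : k != l by apply: contraNneq yl => <-; rewrite yk.
have mk : m != k by rewrite eq_sym.
have xl : X i j l 0 = 0 by case: (F1 i j l ni) => // /eqP; rewrite (negPf yl).
have S4 := sum4 _ jm jk jl mk ml kl.
have claim : forall d, d != 0 -> d != i -> forall t, t != l -> X d j t 0 = 0.
  move=> d nd di.
  have ydl : Y d j l 0 = 0.
    have := hY i j d; rewrite eq_sym (negPf di) hdotE S4 /=.
    rewrite F3 // ym yk conjC0 !mul0r !add0r; by move/mul_conj_eq0/(_ yl).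
  have := hY d j d; rewrite eqxx => /nz_of_norm [t0 yt0].
  have xt0 : X d j t0 0 = 0 by case: (F1 d j t0 nd) => // /eqP; rewrite (negPf yt0).
  have hXd := hX i j d; rewrite eq_sym (negPf di) hdotE S4 /= in hXd.
  rewrite F2 // xl conjC0 !mul0r add0r addr0 in hXd.
  have H : X d j m 0 = 0 /\ X d j k 0 = 0.
    case/or4P: (four t0 jm jk jl mk ml kl) => /eqP e; subst t0.
    - by rewrite F3 ?eqxx in yt0.
    - by split=> //; move: hXd; rewrite xt0 mulr0 add0r; move/mul_conj_eq0/(_ xk).
    - by split=> //; move: hXd; rewrite xt0 mulr0 addr0; move/mul_conj_eq0/(_ xm).
    - by rewrite ydl eqxx in yt0.
  move=> t tl; case: H => Hm Hk.
  case/or4P: (four t jm jk jl mk ml kl) => /eqP E; subst t; rewrite ?F2 ?Hm ?Hk //.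
  by rewrite eqxx in tl.
have [i1 [i2 [n1 i1i n2 i2i i12]]] := rows3 ni.
have nzl : forall d, d != 0 -> d != i -> X d j l 0 != 0.
  move=> d nd di; apply/eqP => e; have := hX d j d; rewrite eqxx hdotE S4 /=.
  by rewrite e !claim // conjC0 !mul0r !addr0 => /eqP; rewrite eq_sym oner_eq0.
have := hX i1 j i2; rewrite (negPf i12) hdotE S4 /= (claim i2 n2 i2i j jl) (claim i2 n2 i2i m ml) (claim i2 n2 i2i k kl) !mulr0 !add0r.
move/mul_conj_eq0 => /(_ (nzl i1 n1 i1i)) /eqP.
by rewrite (negPf (nzl i2 n2 i2i)).
Qed.

End Aux.

Lemma mono (R : rcfType) (x : 'cV[R[i]]_4) (m : 'I_4) :
  hdot x x = 1 -> (forall k, k != m -> x k 0 = 0) ->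
  `|\sum_k (x k 0)^*| = 1 /\ (\sum_k (x k 0)^*) *: x = @ket R 4 m.
Proof.
move=> hn hm.
have xm : (x m 0)^* * x m 0 = 1.
  move: hn; rewrite hdotE (bigD1 m) //= big1 ?addr0 // => k km.
  by rewrite hm // mulr0.
have -> : \sum_k (x k 0)^* = (x m 0)^*.
  rewrite (bigD1 m) //= big1 ?addr0 // => k km; by rewrite hm // conjC0.
split.
  apply/eqP; rewrite -sqrp_eq1 ?normr_ge0 // normCK conjCK xm //.
apply/matrixP => r c; rewrite (ord1 c) mxE ketE.
have [->|rm] := eqVneq r m; first by rewrite xm.
by rewrite (hm r rm) mulr0.
Qed.

Theorem mainTheorem3 (R : realType) (Psi Phi : square R 4) :
  is_QLS Psi -> is_QLS Phi -> orthogonal_QLS Psi Phi -> classical_pair Psi Phi.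
Proof.
move=> [rP cP] [rQ cQ] hPQ.
pose U := Umx (fun k => Psi 0 k). pose V := Umx (fun k => Phi 0 k).
have hU : Defs.unitary U := Umx_unitary (rP 0).1.
have hV : Defs.unitary V := Umx_unitary (rQ 0).1.
pose X i j := U *m Psi i j. pose Y i j := V *m Phi i j.
have hX : forall i j i', hdot (X i j) (X i' j) = (i == i')%:R.
  by move=> i j i'; rewrite /X hdotU // (cP j).1.
have hY : forall i j i', hdot (Y i j) (Y i' j) = (i == i')%:R.
  by move=> i j i'; rewrite /Y hdotU // (cQ j).1.
have X0 : forall k, X 0 k = @ket R 4 k.
  by move=> k; apply/matrixP => r c; rewrite (ord1 c) /X UmxE ketE (rP 0).1.
have Y0 : forall k, Y 0 k = @ket R 4 k.
  by move=> k; apply/matrixP => r c; rewrite (ord1 c) /Y UmxE ketE (rQ 0).1.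
have hXY : forall i j i' j', (i, j) != (i', j') ->
    hdot (X i j) (X i' j') * hdot (Y i j) (Y i' j') = 0.
  move=> i j i' j' ne; rewrite /X /Y !hdotU // -hdot_tens.
  by rewrite (hPQ.1 (i, j) (i', j')) (negPf ne).
have hYX : forall i j i' j', (i, j) != (i', j') ->
    hdot (Y i j) (Y i' j') * hdot (X i j) (X i' j') = 0.
  by move=> i j i' j' ne; rewrite mulrC hXY.
have keyX := core hX hY X0 Y0 hXY.
have keyY := core hY hX Y0 X0 hYX.
pose a i j := \sum_k ((X i j) k 0)^*.
pose b i j := \sum_k ((Y i j) k 0)^*.
have monoX : forall i j, exists m, `|a i j| = 1 /\ a i j *: X i j = @ket R 4 m.
  move=> i j; have [m hm] := keyX i j; exists m.
  by apply: mono hm; rewrite hX eqxx.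
have monoY : forall i j, exists m, `|b i j| = 1 /\ b i j *: Y i j = @ket R 4 m.
  move=> i j; have [m hm] := keyY i j; exists m.
  by apply: mono hm; rewrite hY eqxx.
exists (fun i j => a i j *: X i j), (fun i j => b i j *: Y i j); split; last split.
- apply: (rt_trans _ _ _ (fun i j => X i j, fun i j => Y i j)).
    by apply: rt_step; exact: (iso_unitary Psi Phi hU hV).
  apply: rt_step; apply: iso_phase.
    by move=> i j; have [m [h _]] := monoX i j.
  by move=> i j; have [m [h _]] := monoY i j.
- by move=> i j; have [m [_ h]] := monoX i j; exists m.
- by move=> i j; have [m [_ h]] := monoY i j; exists m.
Qed.
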